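(* Let $k$ be a finite field and $r\ge2$. (a) The class $\mathfrak{N}_5$ of Lie algebras over $k$ satisfying the axioms $\Phi1$–$\Phi5$ coincides with the class of all $U$-algebras $B$ with $\dim_k B/\mathrm{Fit}(B)\le r$. (b) The class $\mathfrak{N}'_5$ of $F_r$-Lie algebras satisfying $\Phi1$–$\Phi4$ and $\Phi'5$ coincides with the class of all $F_r$-Lie algebras $B$ that are $U$-algebras with $\dim_k B/\mathrm{Fit}(B)=r$.
   Context: Products are left-normed. $\mathrm{Fit}(B)$ is the sum of all nilpotent ideals of $B$. A metabelian Lie algebra $B$ (one satisfying $(x_1x_2)(x_3x_4)=0$) is a $U$-algebra if $\mathrm{Fit}(B)$ is abelian and, with $n=\dim B/\mathrm{Fit}(B)$ finite, $\mathrm{Fit}(B)$ is a torsion-free module over $k[x_1,\dots,x_n]$, where the abelian algebra $B/\mathrm{Fit}(B)$ (with basis $\bar b_1,\dots,\bar b_n$) acts on $\mathrm{Fit}(B)$ by $u\cdot x_i=ub_i$. $F_r$ is the free metabelian Lie algebra of rank $r$ with free base $a_1,\dots,a_r$; an $F_r$-Lie algebra contains a designated copy of $F_r$. For a term $y$ and $f\in k[x_1,\dots,x_n]$, $y\cdot f(t_1,\dots,t_n)$ is the Lie term where monomial $x_{i_1}\cdots x_{i_t}$ acts by $y\mapsto yt_{i_1}\cdots t_{i_t}$, extended linearly. Let $\mathrm{Fit}(x)\equiv\forall y\,(xyx=0)$ and $\varphi(x_1,\dots,x_n)\equiv\bigwedge_{(\alpha_i)\in k^n\setminus\{0\}}\neg\mathrm{Fit}(\sum\alpha_ix_i)$.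 Axioms: $\Phi1$: $\forall x_1..x_4\,(x_1x_2)(x_3x_4)=0$. $\Phi2$: $\forall x,y\,(xyx=0\wedge xyy=0\to xy=0)$. $\Phi3$: $\forall x,y,z\,(x\ne0\wedge xy=0\wedge xz=0\to yz=0)$. $\Phi4$: $\forall x_1..x_{r+1}\,\neg\varphi(x_1..x_{r+1})$. $\Phi5$: for every $n\le r$ and nonzero $f\in k[x_1..x_n]$: $\forall z_1,z_2,x_1..x_n\,((z_1z_2)\cdot f(x_1..x_n)=0\wedge z_1z_2\ne0\to\neg\varphi(x_1..x_n))$. $\Phi'5$: for every nonzero $f\in k[x_1..x_r]$: $\forall z_1,z_2\,((z_1z_2)\cdot f(a_1..a_r)=0\to z_1z_2=0)$. *)

(* Defs.v *)
(* Lie algebras over a field k are encoded as an lmodType k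
   together with a bracket (not bundled); products are left-normed. *)
From HB Require Import structures.
From mathcomp Require Import all_boot all_order all_algebra.
From mathcomp Require Import mpoly.
Set Implicit Arguments. Unset Strict Implicit. Unset Printing Implicit Defensive.
Import GRing.Theory.
Local Open Scope ring_scope.

Section Lie.
Variable k : fieldType.

Definition is_lie (V : lmodType k) (br : V -> V -> V) : Prop :=
  [/\ (forall (a : k) x y z, br (a *: x + y) z = a *: br x z + br y z),
      (forall (a : k) x y z, br z (a *: x + y) = a *: br z x + br z y),
      (forall x, br x x = 0) &
      (forall x y z, br (br x y) z + br (br y z) x + br (br z x) y = 0)].

Variables (V : lmodType k) (br : V -> V -> V).

Definition lnprod (x : V) (s : seq V) : V := foldl br x s.

Definition is_ideal (I : V -> Prop) : Prop :=
  [/\ I 0, (forall x y, I x -> I y -> I (x + y)),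
      (forall (a : k) x, I x -> I (a *: x)) &
      (forall x y, I x -> I (br x y))].

Definition nilpotent_ideal (I : V -> Prop) : Prop :=
  exists c : nat, forall (x : V) (s : seq V),
    I x -> (forall y, y \in s -> I y) -> size s = c -> lnprod x s = 0.

Definition Fit (x : V) : Prop :=
  exists (n : nat) (f : 'I_n -> V),
    (forall i, exists I, [/\ is_ideal I, nilpotent_ideal I & I (f i)]) /\
    x = \sum_(i < n) f i.

Definition metabelian : Prop :=
  forall x1 x2 x3 x4, br (br x1 x2) (br x3 x4) = 0.

(* b_1..b_n is a family whose images form a basis of V / S *)
Definition basis_mod (S : V -> Prop) (n : nat) (b : 'I_n -> V) : Prop :=
  (forall x, exists alpha : 'I_n -> k, S (x - \sum_(i < n) alpha i *: b i)) /\
  (forall alpha : 'I_n -> k, S (\sum_(i < n) alpha i *: b i) ->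
     forall i, alpha i = 0).

(* y . x^m (t) : monomial x_0^{m_0} ... x_{n-1}^{m_{n-1}} acting by
   y |-> y t_0 ... t_0 t_1 ... (left-normed) *)
Definition mono_act (n : nat) (y : V) (t : 'I_n -> V) (m : 'X_{1..n}) : V :=
  foldl (fun z i => iter (m i) (fun w => br w (t i)) z) y (enum 'I_n).

Definition poly_act (n : nat) (y : V) (t : 'I_n -> V) (f : {mpoly k[n]}) : V :=
  \sum_(m <- msupp f) f@_m *: mono_act y t m.

(* Fit(B) is a torsion-free k[x_1..x_n]-module with x_i acting as ad b_i *)
Definition torsion_free (n : nat) (b : 'I_n -> V) : Prop :=
  forall (f : {mpoly k[n]}), f != 0 ->
    forall u, Fit u -> poly_act u b f = 0 -> u = 0.

Definition U_algebra_dim (n : nat) : Prop :=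
  [/\ metabelian,
      (forall x y, Fit x -> Fit y -> br x y = 0) &
      exists b : 'I_n -> V, basis_mod Fit b /\ torsion_free b].

(* first-order formulas Fit(x) and phi(x_1..x_n) *)
Definition FitF (x : V) : Prop := forall y, br (br x y) x = 0.

Definition phi (n : nat) (x : 'I_n -> V) : Prop :=
  forall alpha : 'I_n -> k, (exists i, alpha i != 0) ->
    ~ FitF (\sum_(i < n) alpha i *: x i).

Definition Phi1 : Prop := metabelian.
Definition Phi2 : Prop :=
  forall x y, br (br x y) x = 0 /\ br (br x y) y = 0 -> br x y = 0.
Definition Phi3 : Prop :=
  forall x y z, [/\ x <> 0, br x y = 0 & br x z = 0] -> br y z = 0.
Definition Phi4 (r : nat) : Prop :=
  forall x : 'I_r.+1 -> V, ~ phi x.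
Definition Phi5 (r : nat) : Prop :=
  forall (n : nat), (n <= r)%N -> forall f : {mpoly k[n]}, f != 0 ->
    forall (z1 z2 : V) (x : 'I_n -> V),
      poly_act (br z1 z2) x f = 0 /\ br z1 z2 <> 0 -> ~ phi x.
Definition Phi'5 (r : nat) (a : 'I_r -> V) : Prop :=
  forall f : {mpoly k[r]}, f != 0 ->
    forall z1 z2 : V, poly_act (br z1 z2) a f = 0 -> br z1 z2 = 0.

End Lie.

Inductive lie_term (k : fieldType) (r : nat) : Type :=
| LVar of 'I_r
| LZero
| LAdd of lie_term k r & lie_term k r
| LScale of k & lie_term k r
| LBr of lie_term k r & lie_term k r.

Fixpoint lie_eval (k : fieldType) (r : nat) (V : lmodType k)
    (br : V -> V -> V) (a : 'I_r -> V) (t : lie_term k r) : V :=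
  match t with
  | LVar i => a i
  | LZero => 0
  | LAdd t1 t2 => lie_eval br a t1 + lie_eval br a t2
  | LScale c t1 => c *: lie_eval br a t1
  | LBr t1 t2 => br (lie_eval br a t1) (lie_eval br a t2)
  end.

(* a_1..a_r freely generate a free metabelian Lie subalgebra (a designated
   copy of F_r): the only relations among the a_i are those holding in
   every metabelian Lie algebra over k. *)
Definition free_metabelian_gens (k : fieldType) (r : nat) (B : lmodType k)
    (brB : B -> B -> B) (a : 'I_r -> B) : Prop :=
  forall t1 t2 : lie_term k r,
    lie_eval brB a t1 = lie_eval brB a t2 ->
    forall (C : lmodType k) (brC : C -> C -> C),
      is_lie brC -> metabelian brC ->
      forall c : 'I_r -> C, lie_eval brC c t1 = lie_eval brC c t2.

(* Main.v *)
Require Import Defs.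
From HB Require Import structures.
From mathcomp Require Import all_boot all_order all_algebra.
From mathcomp Require Import mpoly ring.
From Stdlib Require Import Classical.
Set Implicit Arguments. Unset Strict Implicit. Unset Printing Implicit Defensive.
Import GRing.Theory.
Local Open Scope ring_scope.

Section Basic.
Variables (k : fieldType) (V : lmodType k) (br : V -> V -> V).
Hypothesis Hlie : is_lie br.

Lemma br0l z : br 0 z = 0.
Proof.
case: Hlie => H _ _ _; have := H 1 0 0 z; rewrite !scale1r !addr0.
by rewrite -{1}[br _ _]addr0 => /addrI /esym.
Qed.
Lemma br0r z : br z 0 = 0.
Proof.
case: Hlie => _ H _ _; have := H 1 0 0 z; rewrite !scale1r !addr0.
by rewrite -{1}[br _ _]addr0 => /addrI /esym.
Qed.
Lemma brDl x y z : br (x + y) z = br x z + br y z.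
Proof. by case: Hlie => H _ _ _; have := H 1 x y z; rewrite !scale1r. Qed.
Lemma brZl a x z : br (a *: x) z = a *: br x z.
Proof. by case: Hlie => H _ _ _; have := H a x 0 z; rewrite !addr0 br0l addr0. Qed.
Lemma brDr x y z : br z (x + y) = br z x + br z y.
Proof. by case: Hlie => _ H _ _; have := H 1 x y z; rewrite !scale1r. Qed.
Lemma brZr a x z : br z (a *: x) = a *: br z x.
Proof. by case: Hlie => _ H _ _; have := H a x 0 z; rewrite !addr0 br0r addr0. Qed.
Lemma brNl x z : br (- x) z = - br x z.
Proof. by rewrite -scaleN1r brZl scaleN1r. Qed.
Lemma brNr x z : br z (- x) = - br z x.
Proof. by rewrite -scaleN1r brZr scaleN1r. Qed.
Lemma brBl x y z : br (x - y) z = br x z - br y z.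
Proof. by rewrite brDl brNl. Qed.
Lemma brBr x y z : br z (x - y) = br z x - br z y.
Proof. by rewrite brDr brNr. Qed.
Lemma brxx x : br x x = 0.
Proof. by case: Hlie. Qed.
Lemma brC x y : br x y = - br y x.
Proof.
have := brxx (x + y); rewrite brDl !brDr !brxx add0r addr0 => /eqP.
by rewrite addr_eq0 => /eqP.
Qed.
Lemma jacobi x y z : br (br x y) z + br (br y z) x + br (br z x) y = 0.
Proof. by case: Hlie. Qed.
Lemma br_suml I (s : seq I) P (F : I -> V) z :
  br (\sum_(i <- s | P i) F i) z = \sum_(i <- s | P i) br (F i) z.
Proof. by apply: (big_morph (fun x => br x z)) => [x y|]; rewrite ?brDl ?br0l. Qed.
Lemma br_sumr I (s : seq I) P (F : I -> V) z :
  br z (\sum_(i <- s | P i) F i) = \sum_(i <- s | P i) br z (F i).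
Proof. by apply: (big_morph (fun x => br z x)) => [x y|]; rewrite ?brDr ?br0r. Qed.

End Basic.

Section FitSec.
Variables (k : fieldType) (V : lmodType k) (br : V -> V -> V).
Hypothesis Hlie : is_lie br.

Lemma Fit0 : Fit br 0.
Proof. by exists 0%N, (fun _ => 0); split=> [[]//|]; rewrite big_ord0. Qed.

Lemma Fit_in (I : V -> Prop) x : is_ideal br I -> nilpotent_ideal br I -> I x -> Fit br x.
Proof.
move=> HI Hn Ix; exists 1%N, (fun _ => x); split; first by move=> _; exists I.
by rewrite big_ord1.
Qed.

Lemma FitD x y : Fit br x -> Fit br y -> Fit br (x + y).
Proof.
move=> [n [f [Hf ->]]] [m [g [Hg ->]]].
exists (n + m)%N, (fun i => match split i with inl j => f j | inr j => g j end).
split.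
  by move=> i; case: (split i) => j; [apply: Hf | apply: Hg].
rewrite big_split_ord /=; congr (_ + _); apply: eq_bigr => i _.
  by have := @unsplitK n m (inl _ i); rewrite /= => ->.
by have := @unsplitK n m (inr _ i); rewrite /= => ->.
Qed.

Lemma FitZ a x : Fit br x -> Fit br (a *: x).
Proof.
move=> [n [f [Hf ->]]]; exists n, (fun i => a *: f i); split; last by rewrite scaler_sumr.
move=> i; have [I [HI Hn Ix]] := Hf i; exists I; split=> //.
by case: HI => _ _ HZ _; apply: HZ.
Qed.

Lemma FitN x : Fit br x -> Fit br (- x).
Proof. by move=> h; rewrite -scaleN1r; apply: FitZ. Qed.

Lemma FitB x y : Fit br x -> Fit br y -> Fit br (x - y).
Proof. by move=> hx hy; apply: FitD => //; apply: FitN. Qed.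

Lemma Fitbr x y : Fit br x -> Fit br (br x y).
Proof.
move=> [n [f [Hf ->]]]; exists n, (fun i => br (f i) y); split; last by rewrite br_suml.
move=> i; have [I [HI Hn Ix]] := Hf i; exists I; split=> //.
by case: HI => _ _ _ HB; apply: HB.
Qed.

Lemma Fitbr2 x y : Fit br y -> Fit br (br x y).
Proof. by move=> h; rewrite brC //; apply/FitN/Fitbr. Qed.

Lemma Fit_sum (I : Type) (s : seq I) (P : pred I) (F : I -> V) :
  (forall i, P i -> Fit br (F i)) -> Fit br (\sum_(i <- s | P i) F i).
Proof.
move=> h; elim: s => [|i s IH]; first by rewrite big_nil; apply: Fit0.
by rewrite big_cons; case: ifP => // Pi; apply: FitD => //; apply: h.
Qed.

Hypothesis Hmet : metabelian br.

Definition P2 (w : V) : Prop := exists s : seq (V * V), w = \sum_(p <- s) br p.1 p.2.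

Lemma P2_ideal : is_ideal br P2.
Proof.
split.
- by exists [::]; rewrite big_nil.
- move=> x y [s ->] [t ->]; exists (s ++ t); by rewrite big_cat.
- move=> a x [s ->]; exists (map (fun p => (a *: p.1, p.2)) s).
  by rewrite big_map scaler_sumr; apply: eq_bigr => p _ /=; rewrite brZl.
- move=> x y [s ->]; exists (map (fun p => (br p.1 p.2, y)) s).
  by rewrite big_map br_suml.
Qed.

Lemma P2_abelian x y : P2 x -> P2 y -> br x y = 0.
Proof.
move=> [s ->] [t ->]; rewrite br_suml // big1 // => p _.
by rewrite br_sumr // big1 // => q _; apply: Hmet.
Qed.

Lemma P2_nil : nilpotent_ideal br P2.
Proof.
exists 1%N => x [|y [|]] // Px Hs _ /=.
by apply: P2_abelian => //; apply: Hs; rewrite inE.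
Qed.

Lemma Fit_prod x y : Fit br (br x y).
Proof.
apply: (Fit_in P2_ideal P2_nil); exists [:: (x, y)].
by rewrite big_cons big_nil addr0.
Qed.

End FitSec.

Section Phi2Sec.
Variables (k : fieldType) (V : lmodType k) (br : V -> V -> V).
Hypothesis Hlie : is_lie br.
Hypothesis Hmet : metabelian br.
Hypothesis H2 : Phi2 br.
Let brDl := brDl Hlie. Let brZl := brZl Hlie. Let brDr := brDr Hlie. Let brZr := brZr Hlie.
Let br0l := br0l Hlie. Let br0r := br0r Hlie. Let brNl := brNl Hlie. Let brNr := brNr Hlie.
Let brBl := brBl Hlie. Let brBr := brBr Hlie. Let brxx := brxx Hlie. Let brC := brC Hlie.
Let jacobi := jacobi Hlie.
Let br_suml := br_suml Hlie. Let br_sumr := br_sumr Hlie.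

Lemma lnprod_rcons x s y : lnprod br x (rcons s y) = br (lnprod br x s) y.
Proof. by rewrite /lnprod foldl_rcons. Qed.

Lemma ideal_lnprod I x s : is_ideal br I -> I x -> I (lnprod br x s).
Proof.
move=> [_ _ _ HB]; elim: s x => [|y s IH] x Ix //=.
by apply: IH; apply: HB.
Qed.

Lemma nil_abelian I : is_ideal br I -> nilpotent_ideal br I ->
  forall x y, I x -> I y -> br x y = 0.
Proof.
move=> HI [c Hc].
pose P m := forall x s, I x -> (forall y, y \in s -> I y) -> size s = m -> lnprod br x s = 0.
have step m : P m.+2 -> P m.+1.
  move=> Pm x s Ix Hs Hsz; case/lastP: s Hs Hsz => [//|s y] Hs; rewrite size_rcons => -[Hsz].
  rewrite lnprod_rcons; set v := lnprod br x s.
  have Iv : I v by apply: ideal_lnprod.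
  have Iy : I y by apply: Hs; rewrite mem_rcons inE eqxx.
  apply: H2; split.
  - have := Pm x (rcons (rcons s y) v); rewrite !lnprod_rcons; apply=> //.
      move=> z; rewrite mem_rcons inE => /orP [/eqP -> //|]; apply: Hs.
    by rewrite !size_rcons Hsz.
  - have := Pm x (rcons (rcons s y) y); rewrite !lnprod_rcons; apply=> //.
      move=> z; rewrite mem_rcons inE => /orP [/eqP -> //|]; apply: Hs.
    by rewrite !size_rcons Hsz.
have P1 : P 1%N.
  case: c Hc => [|c] Hc.
    move=> x s Ix _ _; have := Hc x [::] Ix; rewrite /lnprod /= => -> //.
    by elim: s => //= y s IH; rewrite br0l.
  have : P c.+1 by [].
  elim: c {Hc} => // c IH Pc; apply: IH; exact: step.
move=> x y Ix Iy; have := P1 x [:: y] Ix; apply=> // z; rewrite inE => /eqP -> //.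
Qed.

Lemma FitAb x y : Fit br x -> Fit br y -> br x y = 0.
Proof.
move=> [n [f [Hf ->]]] [m [g [Hg ->]]].
rewrite br_suml // big1 // => i _; rewrite br_sumr // big1 // => j _.
have [I [HI HnI Ix]] := Hf i; have [J [HJ HnJ Jy]] := Hg j.
apply: H2; split.
- apply: (nil_abelian HI HnI) => //; by case: HI => _ _ _ HB; apply: HB.
- apply: (nil_abelian HJ HnJ) => //; rewrite brC //.
  case: HJ => _ _ HZ HB; rewrite -scaleN1r; apply: HZ; exact: HB.
Qed.

Lemma Fit_FitF x : Fit br x -> FitF br x.
Proof. by move=> h y; apply: FitAb => //; apply: Fitbr. Qed.

Lemma FitF_Fit x : FitF br x -> Fit br x.
Proof.
move=> hF.
pose I z := exists c w, Fit br w /\ z = c *: x + w.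
have Hwx w : Fit br w -> br w x = 0.
  move=> Fw; apply: H2; split.
  - by apply: FitAb => //; apply: Fitbr.
  - by rewrite (brC w x) brNl // hF oppr0.
have HI : is_ideal br I.
  split.
  - by exists 0, 0; split; [apply: Fit0| rewrite scale0r addr0].
  - move=> _ _ [c [w [Fw ->]]] [c' [w' [Fw' ->]]]; exists (c + c'), (w + w').
    split; [exact: FitD | by rewrite scalerDl addrACA].
  - move=> a _ [c [w [Fw ->]]]; exists (a * c), (a *: w).
    split; [exact: FitZ | by rewrite scalerDr scalerA].
  - move=> _ y [c [w [Fw ->]]]; exists 0, (br (c *: x + w) y).
    split; last by rewrite scale0r add0r.
    rewrite brDl // brZl //; apply: FitD; first exact/FitZ/Fit_prod.
    exact: Fitbr.
have Hab z y : I z -> I y -> br z y = 0.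
  move=> [c [w [Fw ->]]] [c' [w' [Fw' ->]]].
  rewrite brDl !brDr !brZl !brZr brxx (Hwx _ Fw) (FitAb Fw Fw').
  by rewrite brC (Hwx _ Fw') !(scaler0, oppr0, addr0, add0r).
apply: (Fit_in HI); last by exists 1, 0; split; [apply: Fit0 | rewrite scale1r addr0].
exists 1%N => z [|y [|]] // Iz Hs _ /=; apply: Hab => //; apply: Hs; by rewrite inE eqxx.
Qed.

End Phi2Sec.

Section ActSec.
Variables (k : fieldType) (V : lmodType k) (br : V -> V -> V).
Hypothesis Hlie : is_lie br.
Let brDl := brDl Hlie. Let brZl := brZl Hlie. Let brDr := brDr Hlie. Let brZr := brZr Hlie.
Let br0l := br0l Hlie. Let br0r := br0r Hlie. Let brNl := brNl Hlie. Let brNr := brNr Hlie.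
Let brBl := brBl Hlie. Let brBr := brBr Hlie. Let brxx := brxx Hlie. Let brC := brC Hlie.
Let jacobi := jacobi Hlie.
Let br_suml := br_suml Hlie. Let br_sumr := br_sumr Hlie.

Section Gen.
Variables (n : nat) (t : 'I_n -> V).

Lemma mono_act_lin a w1 w2 m :
  mono_act br (a *: w1 + w2) t m = a *: mono_act br w1 t m + mono_act br w2 t m.
Proof.
rewrite /mono_act; elim: (enum 'I_n) w1 w2 => [|i s IH] w1 w2 //=.
rewrite -IH; congr foldl; elim: (m i) => //= j ->.
by rewrite brDl brZl.
Qed.

Lemma mono_act0 w : mono_act br w t 0%MM = w.
Proof.
by rewrite /mono_act; elim: (enum 'I_n) w => //= i s IH w; rewrite mnm0E /= IH.
Qed.

Lemma poly_act_sub w (f : {mpoly k[n]}) (s : seq 'X_{1..n}) :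
  uniq s -> {subset msupp f <= s} ->
  poly_act br w t f = \sum_(m <- s) f@_m *: mono_act br w t m.
Proof.
move=> us sub; rewrite /poly_act [in RHS](bigID (fun m => m \in msupp f)) /=.
rewrite [X in _ + X]big1 ?addr0; last first.
  by move=> m; rewrite -mcoeff_eq0 => /eqP ->; rewrite scale0r.
rewrite -[in RHS]big_filter; apply: perm_big; apply: uniq_perm.
- exact: msupp_uniq.
- exact: filter_uniq.
- by move=> m; rewrite mem_filter; case: (boolP (m \in msupp f)) => // /sub ->.
Qed.

Lemma poly_actD w (f g : {mpoly k[n]}) :
  poly_act br w t (f + g) = poly_act br w t f + poly_act br w t g.
Proof.
set s := undup (msupp f ++ msupp g ++ msupp (f + g)).
have us : uniq s by apply: undup_uniq.
have s1 : {subset msupp f <= s} by move=> m h; rewrite mem_undup !mem_cat h.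
have s2 : {subset msupp g <= s} by move=> m h; rewrite mem_undup !mem_cat h !orbT.
have s3 : {subset msupp (f + g) <= s} by move=> m h; rewrite mem_undup !mem_cat h !orbT.
rewrite (poly_act_sub w us s1) (poly_act_sub w us s2) (poly_act_sub w us s3).
by rewrite -big_split /=; apply: eq_bigr => m _; rewrite mcoeffD scalerDl.
Qed.

Lemma poly_actZ w c (f : {mpoly k[n]}) :
  poly_act br w t (c *: f) = c *: poly_act br w t f.
Proof.
rewrite (@poly_act_sub _ _ (msupp f)) ?msupp_uniq //; last exact: msuppZ_le.
rewrite /poly_act scaler_sumr; apply: eq_bigr => m _.
by rewrite mcoeffZ scalerA.
Qed.

Lemma poly_act0 w : poly_act br w t 0 = 0.
Proof. by rewrite /poly_act msupp0 big_nil. Qed.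

Lemma poly_act_sum w I (s : seq I) (P : pred I) (F : I -> {mpoly k[n]}) :
  poly_act br w t (\sum_(i <- s | P i) F i) = \sum_(i <- s | P i) poly_act br w t (F i).
Proof.
by apply: (big_morph (fun f => poly_act br w t f)) => [f g|]; rewrite ?poly_actD ?poly_act0.
Qed.

Lemma poly_actX w m : poly_act br w t 'X_[m] = mono_act br w t m.
Proof. by rewrite /poly_act msuppX big_cons big_nil mcoeffX eqxx scale1r addr0. Qed.

Lemma poly_act_lin a w1 w2 (f : {mpoly k[n]}) :
  poly_act br (a *: w1 + w2) t f = a *: poly_act br w1 t f + poly_act br w2 t f.
Proof.
rewrite /poly_act scaler_sumr -big_split /=; apply: eq_bigr => m _.
by rewrite mono_act_lin scalerDr !scalerA mulrC.
Qed.

Lemma poly_act_zero (f : {mpoly k[n]}) : poly_act br 0 t f = 0.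
Proof.
have := poly_act_lin 1 0 0 f; rewrite scaler0 addr0 scale1r.
by rewrite -{1}[poly_act _ _ _ _]addr0 => /addrI /esym.
Qed.

Hypothesis Hmet : metabelian br.
Hypothesis HFab : forall x y, Fit br x -> Fit br y -> br x y = 0.

Lemma comm_Fit w y z : Fit br w -> br (br w y) z = br (br w z) y.
Proof.
move=> Fw; have := jacobi w y z.
rewrite (HFab (Fit_prod Hlie Hmet y z) Fw) addr0 (brC z w) brNl.
by move/eqP; rewrite subr_eq0 => /eqP.
Qed.

Lemma iter_Fit j y w : Fit br w -> Fit br (iter j (fun z => br z y) w).
Proof. by move=> Fw; elim: j => //= j IH; apply: Fitbr. Qed.

Lemma iter_br j y y' w : Fit br w ->
  iter j (fun z => br z y) (br w y') = br (iter j (fun z => br z y) w) y'.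
Proof.
move=> Fw; elim: j => //= j ->; apply: comm_Fit; exact: iter_Fit.
Qed.

Lemma foldl_Fit (m : 'X_{1..n}) s w : Fit br w ->
  Fit br (foldl (fun z i => iter (m i) (fun w => br w (t i)) z) w s).
Proof. by elim: s w => //= i s IH w Fw; apply/IH/iter_Fit. Qed.

Lemma foldl_br (m : 'X_{1..n}) s w y : Fit br w ->
  foldl (fun z i => iter (m i) (fun w => br w (t i)) z) (br w y) s =
  br (foldl (fun z i => iter (m i) (fun w => br w (t i)) z) w s) y.
Proof.
elim: s w => //= i s IH w Fw; rewrite iter_br // IH //; exact: iter_Fit.
Qed.

Lemma mono_act_Fit w m : Fit br w -> Fit br (mono_act br w t m).
Proof. exact: foldl_Fit. Qed.

Lemma mono_act_br w y m : Fit br w -> mono_act br (br w y) t m = br (mono_act br w t m) y.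
Proof. exact: foldl_br. Qed.

Lemma poly_act_Fit w f : Fit br w -> Fit br (poly_act br w t f).
Proof.
move=> Fw; apply: Fit_sum => m _; apply: FitZ; exact: mono_act_Fit.
Qed.

Lemma poly_act_br w y f : Fit br w -> poly_act br (br w y) t f = br (poly_act br w t f) y.
Proof.
move=> Fw; rewrite /poly_act br_suml; apply: eq_bigr => m _.
by rewrite brZl mono_act_br.
Qed.

Lemma foldl_notin (m : 'X_{1..n}) i s w : i \notin s ->
  foldl (fun z j => iter ((m + U_(i))%MM j) (fun w => br w (t j)) z) w s =
  foldl (fun z j => iter (m j) (fun w => br w (t j)) z) w s.
Proof.
elim: s w => //= j s IH w; rewrite inE negb_or => /andP [nij ni].
by rewrite IH // mnmDE mnm1E (negbTE nij) addn0.
Qed.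

Lemma mono_actU w m i : Fit br w ->
  mono_act br w t (m + U_(i))%MM = br (mono_act br w t m) (t i).
Proof.
move=> Fw; rewrite /mono_act.
have : uniq (enum 'I_n) by apply: enum_uniq.
have : i \in enum 'I_n by rewrite mem_enum.
elim: (enum 'I_n) w Fw => // j s IH w Fw.
case: (eqVneq j i) => [->|nji] inj /= /andP [nj us].
- rewrite mnmDE mnm1E eqxx addn1 /= -foldl_br; last exact: iter_Fit.
  by rewrite foldl_notin.
- have ins : i \in s by move: inj; rewrite inE eq_sym (negbTE nji).
  rewrite mnmDE mnm1E eq_sym (negbTE nji) addn0; apply: IH => //; exact: iter_Fit.
Qed.

Lemma poly_act1 w : poly_act br w t 1 = w.
Proof. by rewrite -mpolyX0 poly_actX mono_act0. Qed.

Lemma poly_act_linform w g (c : 'I_n -> k) x : Fit br w ->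
  Fit br (x - \sum_i c i *: t i) ->
  poly_act br w t (g * \sum_i c i *: 'X_i) = br (poly_act br w t g) x.
Proof.
move=> Fw Fx.
have Hm m : poly_act br w t ('X_[m] * \sum_i c i *: 'X_i) = br (mono_act br w t m) x.
  rewrite mulr_sumr poly_act_sum.
  have -> : x = \sum_i c i *: t i + (x - \sum_i c i *: t i) by rewrite addrC subrK.
  rewrite brDr (HFab (mono_act_Fit _ Fw) Fx) addr0 br_sumr; apply: eq_bigr => i _.
  by rewrite -scalerAr -mpolyXD poly_actZ poly_actX mono_actU // brZr.
rewrite {1}[g]mpolyE mulr_suml poly_act_sum [in RHS]/poly_act br_suml; apply: eq_bigr => m _.
by rewrite -scalerAl poly_actZ Hm brZl.
Qed.

Lemma poly_act_linform1 w (c : 'I_n -> k) x : Fit br w ->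
  Fit br (x - \sum_i c i *: t i) ->
  poly_act br w t (\sum_i c i *: 'X_i) = br w x.
Proof.
by move=> Fw Fx; have := poly_act_linform 1 Fw Fx; rewrite mul1r poly_act1.
Qed.

End Gen.
End ActSec.

Section CompSec.
Variable (k : fieldType).

Lemma comp_inj n n' (c : 'M[k]_(n', n)) (f : {mpoly k[n']}) :
  row_free c ->
  f \mPo [tuple \sum_i c j i *: 'X_i | j < n'] = 0 -> f = 0.
Proof.
case/row_freeP=> d cd.
set l := [tuple \sum_i c j i *: 'X_i | j < n'].
set s := [tuple \sum_j d i j *: ('X_j : {mpoly k[n']}) | i < n].
suff H : (f \mPo l) \mPo s = f by move=> e; rewrite -H e comp_mpoly0.
have Hl j : (tnth l j) \mPo s = 'X_j.
  rewrite tnth_mktuple raddf_sum /=.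
  under eq_bigr => i _ do rewrite comp_mpolyZ comp_mpolyXU -tnth_nth tnth_mktuple scaler_sumr.
  rewrite exchange_big /= (bigD1 j) //= [X in _ + X]big1 => [|l' nl'].
    rewrite addr0; under eq_bigr => i _ do rewrite scalerA.
    rewrite -scaler_suml.
    have := congr1 (fun M : 'M[k]_n' => M j j) cd; rewrite !mxE eqxx /= => ->.
    by rewrite scale1r.
  under eq_bigr => i _ do rewrite scalerA.
  rewrite -scaler_suml.
  have := congr1 (fun M : 'M[k]_n' => M j l') cd; rewrite !mxE eq_sym (negbTE nl') /= => ->.
  by rewrite scale0r.
rewrite [in RHS](mpolyE f) (comp_mpolyEX f l) raddf_sum /=.
apply: eq_bigr => m _; rewrite comp_mpolyZ comp_mpolyX rmorph_prod /=.
congr (_ *: _); rewrite mpolyXE_id; apply: eq_bigr => i _.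
by rewrite rmorphXn /= Hl.
Qed.

End CompSec.

Section Transfer.
Variables (k : fieldType) (V : lmodType k) (br : V -> V -> V).
Hypothesis Hlie : is_lie br.
Hypothesis Hmet : metabelian br.
Hypothesis HFab : forall x y, Fit br x -> Fit br y -> br x y = 0.
Variables (n n' : nat) (b : 'I_n -> V) (x : 'I_n' -> V) (al : 'I_n' -> 'I_n -> k).
Hypothesis Hx : forall j, Fit br (x j - \sum_i al j i *: b i).

Let lf := [tuple \sum_i al j i *: ('X_i : {mpoly k[n]}) | j < n'].

Lemma iter_lf w g j e : Fit br w ->
  poly_act br w b (g * (tnth lf j) ^+ e) = iter e (fun v => br v (x j)) (poly_act br w b g).
Proof.
move=> Fw; elim: e => [|e IH]; first by rewrite expr0 mulr1.
rewrite exprSr mulrA tnth_mktuple (poly_act_linform Hlie Hmet HFab _ Fw (Hx j)) /=.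
by rewrite -IH tnth_mktuple.
Qed.

Lemma fold_lf w g (m : 'X_{1..n'}) s : Fit br w ->
  poly_act br w b (g * \prod_(i <- s) (tnth lf i) ^+ (m i)) =
  foldl (fun z i => iter (m i) (fun v => br v (x i)) z) (poly_act br w b g) s.
Proof.
move=> Fw; elim: s g => [|i s IH] g /=; first by rewrite big_nil mulr1.
by rewrite big_cons mulrA IH iter_lf.
Qed.

Lemma act_comp w f : Fit br w -> poly_act br w x f = poly_act br w b (f \mPo lf).
Proof.
move=> Fw; rewrite [in LHS](mpolyE f) (comp_mpolyEX f lf) !poly_act_sum.
apply: eq_bigr => m _; rewrite !poly_actZ poly_actX comp_mpolyX; congr (_ *: _).
rewrite -big_enum -[\prod_(i <- _) _]mul1r fold_lf //.
by rewrite -mpolyX0 poly_actX mono_act0.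
Qed.

Lemma transfer_torsion : torsion_free br b ->
  (forall beta : 'I_n' -> k, Fit br (\sum_j beta j *: x j) -> forall j, beta j = 0) ->
  forall f : {mpoly k[n']}, f != 0 -> forall w, Fit br w -> poly_act br w x f = 0 -> w = 0.
Proof.
move=> Ht Hind f nzf w Fw; rewrite act_comp // => h.
apply: (Ht (f \mPo lf)) => //; apply: contra nzf => /eqP e.
apply/eqP; apply: (@comp_inj k n n' (\matrix_(j, i) al j i)).
- rewrite -kermx_eq0; apply/negPn/negP => /rowV0Pn [v /sub_kermxP vc nzv].
  case/negP: nzv; apply/eqP/rowP => j; rewrite mxE.
  apply: (Hind (fun j => v 0 j)).
  have E : \sum_j v 0 j *: (\sum_i al j i *: b i) = 0.
    transitivity (\sum_i (v *m \matrix_(j, i) al j i) 0 i *: b i).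
      under eq_bigr => j' _ do rewrite scaler_sumr.
      rewrite exchange_big /=; apply: eq_bigr => i _; rewrite mxE scaler_suml.
      by apply: eq_bigr => j' _; rewrite mxE scalerA.
    by rewrite vc; apply: big1 => i _; rewrite mxE scale0r.
  have -> : \sum_j v 0 j *: x j = \sum_j v 0 j *: (x j - \sum_i al j i *: b i)
       + \sum_j v 0 j *: (\sum_i al j i *: b i).
    by rewrite -big_split; apply: eq_bigr => j' _ /=; rewrite -scalerDr subrK.
  rewrite E addr0; apply: Fit_sum => j' _; apply: FitZ; exact: Hx.
- rewrite (_ : [tuple _ | j < n'] = lf) //; apply: eq_from_tnth => j; rewrite !tnth_mktuple.
  by apply: eq_bigr => i _; rewrite mxE.
Qed.

End Transfer.

Section UtoPhi.
Variables (k : fieldType) (V : lmodType k) (br : V -> V -> V).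
Hypothesis Hlie : is_lie br.
Let brDl := brDl Hlie. Let brZl := brZl Hlie. Let brDr := brDr Hlie. Let brZr := brZr Hlie.
Let br0l := br0l Hlie. Let br0r := br0r Hlie. Let brNl := brNl Hlie. Let brNr := brNr Hlie.
Let brBl := brBl Hlie. Let brBr := brBr Hlie. Let brxx := brxx Hlie. Let brC := brC Hlie.
Let jacobi := jacobi Hlie.
Let br_suml := br_suml Hlie. Let br_sumr := br_sumr Hlie.
Hypothesis Hmet : metabelian br.
Hypothesis HFab : forall x y, Fit br x -> Fit br y -> br x y = 0.
Variables (n : nat) (b : 'I_n -> V).
Hypothesis Hb : basis_mod (Fit br) b.
Hypothesis Ht : torsion_free br b.

Lemma Fit_FitF' x : Fit br x -> FitF br x.
Proof. by move=> h y; apply: HFab => //; apply: Fitbr. Qed.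

Lemma mcoeff_lin (al : 'I_n -> k) j :
  (\sum_i al i *: ('X_i : {mpoly k[n]}))@_U_(j) = al j.
Proof.
rewrite raddf_sum /= (bigD1 j) //= big1 => [|i nij].
  by rewrite mcoeffZ mcoeffXU eqxx mulr1 addr0.
by rewrite mcoeffZ mcoeffXU (negbTE nij) mulr0.
Qed.

Lemma Klem w y : Fit br w -> w != 0 -> br w y = 0 -> Fit br y.
Proof.
move=> Fw nzw wy; case: Hb => Hsp _; have [al Hal] := Hsp y.
case: (boolP [forall i, al i == 0]) => [/forallP a0|].
  have := Hal; rewrite big1 ?subr0 // => i _; by rewrite (eqP (a0 i)) scale0r.
rewrite negb_forall => /existsP [i0 nz0].
have nzl : (\sum_i al i *: ('X_i : {mpoly k[n]})) != 0.
  by apply: contra nz0 => /eqP e; rewrite -(mcoeff_lin al i0) e mcoeff0.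
have := Ht nzl Fw; rewrite (poly_act_linform1 Hlie Hmet HFab Fw Hal) wy.
by move=> h; case/eqP: nzw; apply: h.
Qed.

Lemma U_Phi2 : Phi2 br.
Proof.
move=> x y [h1 h2]; case: (eqVneq (br x y) 0) => // nz.
have Fw := Fit_prod Hlie Hmet x y.
exact: HFab (Klem Fw nz h1) (Klem Fw nz h2).
Qed.

Lemma U_Phi3 : Phi3 br.
Proof.
move=> x y z [nzx xy xz]; have nzx' : x != 0 by apply/eqP.
case: (classic (Fit br x)) => Fx.
  by apply: HFab; [apply: (Klem Fx nzx' xy) | apply: (Klem Fx nzx' xz)].
case: (eqVneq (br y z) 0) => // nz; case: Fx.
apply: (Klem (Fit_prod Hlie Hmet y z) nz).
have := jacobi y z x; rewrite (brC z x) xz oppr0 br0l xy br0l !addr0 => ->; by [].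
Qed.

Lemma comb_Fit N (x : 'I_N -> V) (al : 'I_N -> 'I_n -> k) (v : 'rV[k]_N) :
  (forall j, Fit br (x j - \sum_i al j i *: b i)) ->
  v *m \matrix_(j, i) al j i = 0 -> Fit br (\sum_j v 0 j *: x j).
Proof.
move=> Hx vc.
have E : \sum_j v 0 j *: (\sum_i al j i *: b i) = 0.
  transitivity (\sum_i (v *m \matrix_(j, i) al j i) 0 i *: b i).
    under eq_bigr => j' _ do rewrite scaler_sumr.
    rewrite exchange_big /=; apply: eq_bigr => i _; rewrite mxE scaler_suml.
    by apply: eq_bigr => j' _; rewrite mxE scalerA.
  by rewrite vc; apply: big1 => i _; rewrite mxE scale0r.
have -> : \sum_j v 0 j *: x j = \sum_j v 0 j *: (x j - \sum_i al j i *: b i)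
     + \sum_j v 0 j *: (\sum_i al j i *: b i).
  by rewrite -big_split; apply: eq_bigr => j' _ /=; rewrite -scalerDr subrK.
rewrite E addr0; apply: Fit_sum => j' _; apply: FitZ; exact: Hx.
Qed.

Lemma coords N (x : 'I_N -> V) :
  exists al : 'I_N -> 'I_n -> k, forall j, Fit br (x j - \sum_i al j i *: b i).
Proof. by case: Hb => Hsp _; have := fin_all_exists (fun j => Hsp (x j)). Qed.

Lemma dep N (x : 'I_N -> V) : (n < N)%N ->
  exists2 beta : 'I_N -> k, (exists j, beta j != 0) & Fit br (\sum_j beta j *: x j).
Proof.
move=> ltnN; have [al Hal] := coords x.
have : kermx (\matrix_(j, i) al j i) != 0.
  rewrite kermx_eq0 /row_free; apply/negP => /eqP e.
  by have := rank_leq_col (\matrix_(j, i) al j i); rewrite e leqNgt ltnN.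
case/rowV0Pn => v /sub_kermxP vc nzv; exists (fun j => v 0 j); last exact: comb_Fit.
apply/existsP; rewrite -negb_forall; apply: contra nzv => /forallP h.
by apply/eqP/rowP => j; rewrite mxE (eqP (h j)).
Qed.

Lemma U_Phi4 r : (n <= r)%N -> Phi4 br r.
Proof.
move=> le x Hphi; have [beta [j nzj] Fb] := dep x (leq_ltn_trans le (ltnSn r)).
exact: (Hphi beta (ex_intro _ j nzj) (Fit_FitF' Fb)).
Qed.

Lemma indep_transfer N (x : 'I_N -> V) :
  (forall beta : 'I_N -> k, Fit br (\sum_j beta j *: x j) -> forall j, beta j = 0) ->
  forall f : {mpoly k[N]}, f != 0 -> forall w, Fit br w -> poly_act br w x f = 0 -> w = 0.
Proof.
move=> Hind; have [al Hal] := coords x.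
exact: (transfer_torsion Hlie Hmet HFab Hal Ht Hind).
Qed.

Lemma phi_indep N (x : 'I_N -> V) : phi br x ->
  forall beta : 'I_N -> k, Fit br (\sum_j beta j *: x j) -> forall j, beta j = 0.
Proof.
move=> Hphi beta Fb j; apply/eqP; apply/negP => /negP nz.
exact: (Hphi beta (ex_intro _ j nz) (Fit_FitF' Fb)).
Qed.

Lemma U_Phi5 r : Phi5 br r.
Proof.
move=> n' _ f nzf z1 z2 x [h nz] Hphi; apply: nz.
exact: (indep_transfer (phi_indep Hphi) nzf (Fit_prod Hlie Hmet z1 z2) h).
Qed.

End UtoPhi.

Section PhiToU.
Variables (k : fieldType) (V : lmodType k) (br : V -> V -> V).
Hypothesis Hlie : is_lie br.
Let brDl := brDl Hlie. Let brZl := brZl Hlie. Let brDr := brDr Hlie. Let brZr := brZr Hlie.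
Let br0l := br0l Hlie. Let br0r := br0r Hlie. Let brNl := brNl Hlie. Let brNr := brNr Hlie.
Let brBl := brBl Hlie. Let brBr := brBr Hlie. Let brxx := brxx Hlie. Let brC := brC Hlie.
Let jacobi := jacobi Hlie.
Let br_suml := br_suml Hlie. Let br_sumr := br_sumr Hlie.
Hypothesis Hmet : metabelian br.
Hypothesis H2 : Phi2 br.
Hypothesis H3 : Phi3 br.
Let HFab := FitAb Hlie H2.

Definition indep n (b : 'I_n -> V) :=
  forall al : 'I_n -> k, Fit br (\sum_i al i *: b i) -> forall i, al i = 0.

Definition ext n (b : 'I_n -> V) (y : V) : 'I_n.+1 -> V :=
  fun i => match unlift ord_max i with Some j => b j | None => y end.

Lemma sum_ext n (b : 'I_n -> V) y (al : 'I_n.+1 -> k) :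
  \sum_i al i *: ext b y i =
  \sum_(i < n) al (lift ord_max i) *: b i + al ord_max *: y.
Proof.
rewrite big_ord_recr /= /ext unlift_none; congr (_ + _); apply: eq_bigr => i _.
have -> : widen_ord (leqnSn n) i = lift ord_max i by apply: val_inj; rewrite /= /bump leqNgt ltn_ord.
by rewrite liftK.
Qed.

Lemma extend n (b : 'I_n -> V) y : indep b ->
  ~ (exists al : 'I_n -> k, Fit br (y - \sum_i al i *: b i)) -> indep (ext b y).
Proof.
move=> Hb Hy al; rewrite sum_ext => F.
have c0 : al ord_max = 0.
  apply/eqP; apply/negP => /negP nz; apply: Hy.
  exists (fun i => - (al ord_max)^-1 * al (lift ord_max i)).
  have -> : y - \sum_i (- (al ord_max)^-1 * al (lift ord_max i)) *: b i =
            (al ord_max)^-1 *: (\sum_(i < n) al (lift ord_max i) *: b i + al ord_max *: y).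
    rewrite scalerDr scalerA mulVf // scale1r addrC; congr (_ + _).
    rewrite scaler_sumr -sumrN; apply: eq_bigr => i _.
    by rewrite scalerA -scaleNr mulNr opprK.
  exact: FitZ.
rewrite c0 scale0r addr0 in F.
move=> i; case: (unliftP ord_max i) => [j ->|->] //.
exact: (Hb (fun j => al (lift ord_max j)) F j).
Qed.

Lemma indep_phi n (b : 'I_n -> V) : indep b -> phi br b.
Proof.
move=> Hb al [i nz] FF; have := Hb al (FitF_Fit Hlie Hmet H2 FF) i.
by move/eqP; rewrite (negbTE nz).
Qed.

Lemma span_from r (b : 'I_r -> V) : Phi4 br r -> indep b ->
  forall y, exists al : 'I_r -> k, Fit br (y - \sum_i al i *: b i).
Proof.
move=> H4 Hb y; apply: NNPP => Hy.
exact: (H4 _ (indep_phi (extend Hb Hy))).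
Qed.

Lemma basis_exists r : Phi4 br r ->
  exists n, (n <= r)%N /\ exists b : 'I_n -> V, basis_mod (Fit br) b.
Proof.
move=> H4.
suff H : forall d n (b : 'I_n -> V), (n + d = r)%N -> indep b ->
  exists n, (n <= r)%N /\ exists b : 'I_n -> V, basis_mod (Fit br) b.
  apply: (H r 0%N (fun i : 'I_0 => 0)) => //; by move=> al _ [].
elim=> [|d IH] n b Hnd Hb.
  rewrite addn0 in Hnd; subst n; exists r; split=> //; exists b; split=> //.
  exact: span_from.
case: (classic (forall y, exists al : 'I_n -> k, Fit br (y - \sum_i al i *: b i))) => Hsp.
  by exists n; split; [rewrite -Hnd leq_addr | exists b].
have [y Hy] := not_all_ex_not _ _ Hsp.
apply: (IH n.+1 (ext b y)); first by rewrite addSnnS.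
exact: extend.
Qed.

Lemma torsion_from n (b : 'I_n -> V) : basis_mod (Fit br) b ->
  (forall f : {mpoly k[n]}, f != 0 -> forall z1 z2,
     poly_act br (br z1 z2) b f = 0 -> br z1 z2 = 0) ->
  torsion_free br b.
Proof.
move=> [Hsp Hind] Hp f nzf u Fu h.
case: n b f Hsp Hind Hp nzf h => [|n] b f Hsp Hind Hp nzf h.
  have m0 (m : 'X_{1..0}) : m = 0%MM by apply/mnmP => -[].
  have in0 : 0%MM \in msupp f.
    move: nzf; rewrite -msupp_eq0; case: (msupp f) => // m s _.
    by rewrite (m0 m) inE eqxx.
  have Hperm : perm_eq (msupp f) [:: 0%MM].
    apply: uniq_perm; [exact: msupp_uniq | by [] | ].
    by move=> m; rewrite (m0 m) inE eqxx in0.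
  move: h; rewrite /poly_act (perm_big _ Hperm) big_seq1 mono_act0.
  move/eqP; rewrite scaler_eq0 => /orP [|/eqP //].
  by rewrite mcoeff_eq0 in0.
set y := b ord0.
have w0 : br u y = 0.
  by apply: (Hp f nzf); rewrite (@poly_act_br _ _ _ Hlie _ b Hmet HFab u y f Fu) h br0l.
case: (eqVneq u 0) => // nzu.
have Fy : Fit br y.
  apply: (FitF_Fit Hlie Hmet H2) => t; rewrite brC.
  rewrite (H3 (x := u)) ?oppr0 //; split=> //; first exact/eqP.
  exact: HFab (Fit_prod Hlie Hmet y t).
have := Hind (fun i => (i == ord0)%:R); rewrite (bigD1 ord0) //= big1 => [|i ni].
  by rewrite ?eqxx scale1r addr0 => /(_ Fy ord0) /eqP; rewrite eqxx oner_eq0.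
by rewrite (negbTE ni) scale0r.
Qed.

Lemma Phi_U r : Phi4 br r -> Phi5 br r ->
  exists n, (n <= r)%N /\ U_algebra_dim br n.
Proof.
move=> H4 H5; have [n [le [b Hb]]] := basis_exists H4.
exists n; split=> //; split=> //; exists b; split=> //.
apply: torsion_from => // f nzf z1 z2 h.
case: (eqVneq (br z1 z2) 0) => // nz.
case: (H5 n le f nzf z1 z2 b); first by split=> //; apply/eqP.
by apply: indep_phi; case: Hb.
Qed.

End PhiToU.

Section Small.
Variable k : fieldType.
Let e0 : 'I_2 := ord0.
Let e1 : 'I_2 := ord_max.
Let D : 'rV[k]_2 := delta_mx 0 e1.
Definition brS (u v : 'rV[k]_2) : 'rV[k]_2 := (u 0 e1 * v 0 e0 - u 0 e0 * v 0 e1) *: D.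

Lemma D0 : D 0 e0 = 0. Proof. by rewrite mxE. Qed.
Lemma D1 : D 0 e1 = 1. Proof. by rewrite mxE. Qed.
Lemma brS0 u v : brS u v 0 e0 = 0. Proof. by rewrite mxE D0 mulr0. Qed.
Lemma brS1 u v : brS u v 0 e1 = u 0 e1 * v 0 e0 - u 0 e0 * v 0 e1.
Proof. by rewrite mxE D1 mulr1. Qed.

Lemma brS_lie : is_lie brS.
Proof.
split.
- move=> a x y z; rewrite /brS scalerA -scalerDl !mxE; congr (_ *: _); ring.
- move=> a x y z; rewrite /brS scalerA -scalerDl !mxE; congr (_ *: _); ring.
- by move=> x; rewrite /brS mulrC subrr scale0r.
- move=> x y z; rewrite {1 3 5}/brS !brS0 !brS1 -!scalerDl.
  rewrite (_ : _ + _ + _ = 0) ?scale0r //; ring.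
Qed.

Lemma brS_met : metabelian brS.
Proof. by move=> x1 x2 x3 x4; rewrite /brS !brS0 !mulr0 mul0r subrr scale0r. Qed.

Lemma brS_test (P : 'rV[k]_2) : P 0 e0 = 1 -> brS (brS P D) P != 0.
Proof.
move=> P0; apply/eqP => /(congr1 (fun M : 'rV[k]_2 => M 0 e1)).
rewrite brS1 brS0 brS1 D0 D1 P0 mxE.
by move/eqP; rewrite mul0r subr0 mulr0 mul1r sub0r mulN1r oppr_eq0 oner_eq0.
Qed.

End Small.

Section Free.
Variables (k : fieldType) (r : nat) (B : lmodType k) (brB : B -> B -> B) (a : 'I_r -> B).
Hypothesis Hlie : is_lie brB.
Hypothesis Hfree : free_metabelian_gens brB a.

Fixpoint tsum (al : 'I_r -> k) (s : seq 'I_r) : lie_term k r :=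
  match s with
  | [::] => LZero k r
  | i :: s' => LAdd (LScale (al i) (LVar k i)) (tsum al s')
  end.

Lemma eval_tsum (C : lmodType k) (brC : C -> C -> C) (c : 'I_r -> C) al s :
  lie_eval brC c (tsum al s) = \sum_(i <- s) al i *: c i.
Proof. by elim: s => [|i s IH] /=; rewrite ?big_nil ?big_cons ?IH. Qed.

Lemma free_indep : (2 <= r)%N -> forall al : 'I_r -> k,
  FitF brB (\sum_i al i *: a i) -> forall i, al i = 0.
Proof.
move=> r2 al FF i0; apply/eqP/negP => /negP nz.
have [j nji] : exists j : 'I_r, j != i0.
  case: (eqVneq i0 (Ordinal (ltnW r2))) => [e|ne]; last by exists (Ordinal (ltnW r2)); rewrite eq_sym.
  by exists (Ordinal r2); rewrite e; apply/eqP => -[].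
pose t := tsum al (enum 'I_r).
have := Hfree (t1 := LBr (LBr t (LVar k j)) t) (t2 := LZero k r).
rewrite /= !eval_tsum big_enum /= FF => /(_ erefl _ _ (@brS_lie k) (@brS_met k)).
pose p : 'rV[k]_2 := delta_mx 0 ord0.
pose c := fun i : 'I_r => if i == i0 then (al i0)^-1 *: p else delta_mx 0 ord_max.
move/(_ c); rewrite eval_tsum big_enum /= => h.
have cj : c j = delta_mx 0 ord_max by rewrite /c (negbTE nji).
rewrite cj in h.
have P0 : (\sum_i al i *: c i) 0 ord0 = 1.
  rewrite summxE (bigD1 i0) //= big1 => [|i ni]; last by rewrite /c (negbTE ni) !mxE mulr0.
  by rewrite /c eqxx !mxE mulr1 mulfV // addr0.
by move: (brS_test P0); rewrite h eqxx.
Qed.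

End Free.

Unset Implicit Arguments.
Theorem lemma3p6 (k : finFieldType) (r : nat) : (2 <= r)%N ->
  (* (a) *)
  (forall (B : lmodType k) (br : B -> B -> B), is_lie br ->
     ([/\ Phi1 br, Phi2 br, Phi3 br, Phi4 br r & Phi5 br r] <->
      exists n : nat, (n <= r)%N /\ U_algebra_dim br n)) /\
  (* (b) *)
  (forall (B : lmodType k) (br : B -> B -> B) (a : 'I_r -> B),
     is_lie br -> free_metabelian_gens br a ->
     ([/\ Phi1 br, Phi2 br, Phi3 br, Phi4 br r & Phi'5 br a] <->
      U_algebra_dim br r)).
Proof.
move=> r2; split.
  move=> B br Hlie; split.
    by case=> Hmet H2 H3 H4 H5; apply: (Phi_U Hlie Hmet H2 H3 H4 H5).
  case=> n [le [Hmet HFab [b [Hb Ht]]]]; split=> //.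
  - exact: (U_Phi2 Hlie Hmet HFab Hb Ht).
  - exact: (U_Phi3 Hlie Hmet HFab Hb Ht).
  - exact: (U_Phi4 Hlie HFab Hb le).
  - exact: (U_Phi5 Hlie Hmet HFab Hb Ht).
move=> B br a Hlie Hfree; split.
  case=> Hmet H2 H3 H4 H5.
  have Hind : indep br a.
    by move=> al F; apply: (free_indep Hfree r2); apply: (Fit_FitF Hlie H2).
  have Hb : basis_mod (Fit br) a.
    by split; last exact: Hind; exact: (span_from Hlie Hmet H2 H4 Hind).
  split=> //; first exact: FitAb Hlie H2.
  exists a; split=> //; apply: (torsion_from Hlie Hmet H2 H3 Hb) => f nzf z1 z2 h.
  exact: (H5 f nzf z1 z2 h).
case=> Hmet HFab [b [Hb Ht]]; split=> //.
- exact: (U_Phi2 Hlie Hmet HFab Hb Ht).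
- exact: (U_Phi3 Hlie Hmet HFab Hb Ht).
- exact: (U_Phi4 Hlie HFab Hb (leqnn r)).
- move=> f nzf z1 z2 h.
  apply: (indep_transfer Hlie Hmet HFab Hb Ht _ nzf (Fit_prod Hlie Hmet z1 z2) h).
  by move=> beta F; apply: (free_indep Hfree r2); apply: (Fit_FitF' Hlie HFab F).
Qed.
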